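(* Let $m\ge 2$, $n\ge 2$, and let $P:[m]\times[m]\to\mathbb{R}\mathrm{P}^n$ be a Q-net. Suppose that for every $d\in[m-1]$ the iterated Laplace transforms $\mathcal{L}_A^dP,\ \mathcal{L}_B^dP:[m-d]\times[m-d]\to\mathbb{R}\mathrm{P}^n$ are well-defined Q-nets. Then $\mathcal{L}_A^{m-1}P$ and $\mathcal{L}_B^{m-1}P$ are two points (each is defined on the one-element set $[1]\times[1]$). Suppose moreover that all points $P_{i,j}$ with $(i,j)\in[m]\times[m]$, $(i,j)\neq(m,m)$, lie on a quadric $\mathcal{Q}\subset\mathbb{R}\mathrm{P}^n$. Then $P_{m,m}\in\mathcal{Q}$ if and only if the points $\mathcal{L}_A^{m-1}P$ and $\mathcal{L}_B^{m-1}P$ are conjugate with respect to $\mathcal{Q}$.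
   Context: $[m]=\{1,\dots,m\}$. $X\vee Y$ denotes the projective join. A Q-net on $D\subset\mathbb{Z}^2$ (here $D=[k]\times[k]$) is a map $P:D\to\mathbb{R}\mathrm{P}^n$ such that for every elementary quad in $D$ the four points $P_{i,j},P_{i+1,j},P_{i+1,j+1},P_{i,j+1}$ are coplanar. Its Laplace points are $A_{i,j}=(P_{i,j}\vee P_{i+1,j})\cap(P_{i,j+1}\vee P_{i+1,j+1})$ and $B_{i,j}=(P_{i,j}\vee P_{i,j+1})\cap(P_{i+1,j}\vee P_{i+1,j+1})$; for $P$ on $[k]\times[k]$ the Laplace transforms are $\mathcal{L}_AP(i,j)=A_{i,j}$, $\mathcal{L}_BP(i,j)=B_{i,j}$ on $[k-1]\times[k-1]$, and $\mathcal{L}_A^d,\mathcal{L}_B^d$ denote $d$-fold iterates. A quadric is $\mathcal{Q}=\{[x]:\varphi(x,x)=0\}$ for a nonzero symmetric bilinear form $\varphi$ on $\mathbb{R}^{n+1}$; points $[x],[y]$ are conjugate w.r.t. $\mathcal{Q}$ if $\varphi(x,y)=0$. Standing assumption of the paper: all data are generic (in general position subject to the stated constraints; e.g. vertices of each quad distinct, no three collinear). *)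

(* Defs.v *)
From HB Require Import structures.
From mathcomp Require Import all_boot all_order all_algebra.
From mathcomp Require Import reals.
Set Implicit Arguments. Unset Strict Implicit. Unset Printing Implicit Defensive.
Import Order.TTheory GRing.Theory Num.Theory.
Local Open Scope ring_scope.

(* A point of RP^n is represented by a (nonzero) homogeneous coordinate
   vector in R^(n+1); every notion below is invariant under rescaling. *)
Definition pt (R : realType) (n : nat) := 'rV[R]_(n.+1).

(* A net on [k] x [k] (1-based indices (i,j), 1 <= i,j <= k). *)
Definition net (R : realType) (n : nat) := nat -> nat -> pt R n.

Definition in_range (k i : nat) : bool := (1 <= i <= k)%N.

Definition coplanar4 (R : realType) (n : nat) (a b c d : pt R n) : bool :=
  (\rank (col_mx a (col_mx b (col_mx c d))) <= 3)%N.

Definition noncollinear3 (R : realType) (n : nat) (a b c : pt R n) : bool :=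
  \rank (col_mx a (col_mx b c)) == 3%N.

Definition Qnet (R : realType) (n k : nat) (P : net R n) : Prop :=
  (forall i j, in_range k i -> in_range k j -> P i j != 0) /\
  (forall i j, in_range k.-1 i -> in_range k.-1 j ->
     coplanar4 (P i j) (P i.+1 j) (P i.+1 j.+1) (P i j.+1)).

(* Standing genericity assumption (as made explicit in the paper):
   no three vertices of an elementary quad are collinear (in particular
   the vertices are distinct). *)
Definition generic_net (R : realType) (n k : nat) (P : net R n) : Prop :=
  forall i j, in_range k.-1 i -> in_range k.-1 j ->
    let a := P i j in let b := P i.+1 j in
    let c := P i.+1 j.+1 in let d := P i j.+1 in
    [&& noncollinear3 a b c, noncollinear3 a b d,
        noncollinear3 a c d & noncollinear3 b c d].

(* L is the Laplace transform L_A of the net P on [k] x [k]: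
   L i j (for (i,j) in [k-1]^2) is the intersection point of the lines
   P_{i,j} v P_{i+1,j} and P_{i,j+1} v P_{i+1,j+1}. *)
Definition laplaceA (R : realType) (n k : nat) (P L : net R n) : Prop :=
  forall i j, in_range k.-1 i -> in_range k.-1 j ->
    [/\ L i j != 0,
        (L i j <= col_mx (P i j) (P i.+1 j))%MS &
        (L i j <= col_mx (P i j.+1) (P i.+1 j.+1))%MS].

(* L is the Laplace transform L_B of P: L i j is the intersection of the
   lines P_{i,j} v P_{i,j+1} and P_{i+1,j} v P_{i+1,j+1}. *)
Definition laplaceB (R : realType) (n k : nat) (P L : net R n) : Prop :=
  forall i j, in_range k.-1 i -> in_range k.-1 j ->
    [/\ L i j != 0,
        (L i j <= col_mx (P i j) (P i j.+1))%MS &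
        (L i j <= col_mx (P i.+1 j) (P i.+1 j.+1))%MS].

Definition bform (R : realType) (n : nat) (M : 'M[R]_(n.+1)) (x y : pt R n) : R :=
  (x *m M *m y^T) 0 0.

Definition quadric_form (R : realType) (n : nat) (M : 'M[R]_(n.+1)) : Prop :=
  M^T = M /\ M != 0.

Definition on_quadric (R : realType) (n : nat) (M : 'M[R]_(n.+1)) (x : pt R n) : Prop :=
  bform M x x = 0.

Definition conjugate (R : realType) (n : nat) (M : 'M[R]_(n.+1)) (x y : pt R n) : Prop :=
  bform M x y = 0.

(* Main.v *)
Require Import Defs.
From HB Require Import structures.
From mathcomp Require Import all_boot all_order all_algebra.
From mathcomp Require Import reals.
From mathcomp Require Import zify.
From mathcomp.algebra_tactics Require Import ring lra.
Import Order.TTheory GRing.Theory Num.Theory.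
Local Open Scope ring_scope.
Set Implicit Arguments. Unset Strict Implicit. Unset Printing Implicit Defensive.

Section Aux.
Variables (R : realType) (n : nat).
Implicit Types (a b c x y z U W : pt R n) (M : 'M[R]_(n.+1)).

Lemma bformDl M x y z : bform M (x + y) z = bform M x z + bform M y z.
Proof. by rewrite /bform !mulmxDl mxE. Qed.
Lemma bformZl M (k : R) x z : bform M (k *: x) z = k * bform M x z.
Proof. by rewrite /bform -!scalemxAl mxE. Qed.
Lemma bformDr M x y z : bform M z (x + y) = bform M z x + bform M z y.
Proof. by rewrite /bform raddfD /= mulmxDr mxE. Qed.
Lemma bformZr M (k : R) x z : bform M z (k *: x) = k * bform M z x.
Proof. by rewrite /bform linearZ /= -scalemxAr mxE. Qed.
Lemma bformNl M x z : bform M (- x) z = - bform M x z.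
Proof. by rewrite -scaleN1r bformZl mulN1r. Qed.
Lemma bformNr M x z : bform M z (- x) = - bform M z x.
Proof. by rewrite -scaleN1r bformZr mulN1r. Qed.
Lemma bformC M x y : M^T = M -> bform M x y = bform M y x.
Proof.
move=> HM; rewrite /bform -[in RHS](trmxK (y *m M *m x^T)).
by rewrite [in RHS]mxE !trmx_mul trmxK HM mulmxA.
Qed.

Definition indep3 a b c := forall x y z : R, x *: a + y *: b + z *: c = 0 -> [/\ x = 0, y = 0 & z = 0].
Definition indep2 a b := forall x y : R, x *: a + y *: b = 0 -> x = 0 /\ y = 0.

Lemma nc_indep a b c : noncollinear3 a b c -> indep3 a b c.
Proof.
move=> H x y z E.
have fr : row_free (col_mx a (col_mx b c)) by exact: H.
set v : 'M[R]_(1, 1 + (1 + 1)) := row_mx x%:M (row_mx y%:M z%:M).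
have : v *m col_mx a (col_mx b c) = 0.
  by rewrite mul_row_col mul_row_col !mul_scalar_mx addrA.
move/eqP; rewrite (mulmx_free_eq0 _ fr) => /eqP v0.
have e1 := congr1 (fun N : 'M[R]_(1, 1 + (1 + 1)) => N 0 (lshift (1 + 1) 0)) v0.
have e2 := congr1 (fun N : 'M[R]_(1, 1 + (1 + 1)) => N 0 (rshift 1 (lshift 1 0))) v0.
have e3 := congr1 (fun N : 'M[R]_(1, 1 + (1 + 1)) => N 0 (rshift 1 (rshift 1 0))) v0.
move: e1 e2 e3; rewrite /v /= !(row_mxEl, row_mxEr) !mxE /= !mulr1n.
by move=> -> -> ->.
Qed.

Lemma span2P v a b : (v <= col_mx a b)%MS -> exists x y : R, v = x *: a + y *: b.
Proof.
case/submxP => D ->; rewrite -(hsubmxK D) mul_row_col.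
exists (lsubmx D 0 0), (rsubmx D 0 0).
by rewrite -!mul_scalar_mx -!mx11_scalar.
Qed.

Lemma indep3_12 a b c : indep3 a b c -> indep3 b a c.
Proof. move=> H x y z E; have [] := H y x z; first by rewrite -E (addrC (y *: a)).
by []. Qed.
Lemma indep3_23 a b c : indep3 a b c -> indep3 a c b.
Proof. move=> H x y z E; have [] := H x z y; first by rewrite -E -!addrA (addrC (z *: b)).
by []. Qed.
Lemma indep3_2 a b c : indep3 a b c -> indep2 a b.
Proof. move=> H x y E; have [] := H x y 0; first by rewrite scale0r addr0.
by []. Qed.

Ltac pw H k := let h := fresh "h" in
  have h := congr1 (fun N : pt _ _ => N 0 k) H; rewrite /= ?mxE in h.

Lemma swap2 a b x y : (x <= col_mx a b)%MS -> (y <= col_mx a b)%MS -> indep2 x y ->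
  (exists c1 c2 : R, a = c1 *: x + c2 *: y) /\ (exists c1 c2 : R, b = c1 *: x + c2 *: y).
Proof.
move=> /span2P [p [q Hx]] /span2P [r [s Hy]] Hi.
have [D0|Dn] := eqVneq (p * s - q * r) 0.
  have [s0 /eqP] : s = 0 /\ - q = 0.
    apply: (Hi s (- q)); apply/rowP => k; pw Hx k; pw Hy k; rewrite !mxE h h0.
    rewrite (_ : _ + _ = (p * s - q * r) * a 0 k); first by rewrite D0 mul0r.
    ring.
  rewrite oppr_eq0 => /eqP q0.
  have [r0 /eqP] : r = 0 /\ - p = 0.
    apply: (Hi r (- p)); apply/rowP => k; pw Hx k; pw Hy k; rewrite !mxE h h0 s0 q0.
    ring.
  rewrite oppr_eq0 => /eqP p0.
  have [] := Hi 1 0; last by move=> /eqP; rewrite oner_eq0.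
  by rewrite Hx p0 q0 !scale0r !addr0 scaler0.
split.
  exists (s / (p * s - q * r)), (- q / (p * s - q * r)).
  apply/rowP => k; pw Hx k; pw Hy k; rewrite !mxE h h0. by field.
exists (- r / (p * s - q * r)), (p / (p * s - q * r)).
apply/rowP => k; pw Hx k; pw Hy k; rewrite !mxE h h0. by field.
Qed.

Lemma half X11 X12 X21 X22 U Z :
  indep3 X11 X12 X21 -> indep3 X12 X21 X22 -> U != 0 -> Z != 0 ->
  (U <= col_mx X11 X21)%MS -> (U <= col_mx X12 X22)%MS ->
  (exists a b : R, Z = a *: X11 + b *: X12) -> (exists c e : R, Z = c *: X21 + e *: X22) ->
  exists al be ga de ka : R, [/\ U = al *: X11 + be *: X21, U = ga *: X12 + de *: X22,
     de != 0, al != 0 & al *: X11 - ga *: X12 = ka *: Z].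
Proof.
move=> I1 I2 U0 Z0 /span2P [al [be H1]] /span2P [ga [de H2]] [a [b Z1]] [c [e Z2]].
have de0 : de != 0.
  apply/eqP => d0; have [a0 /eqP g0 b0] : [/\ al = 0, - ga = 0 & be = 0].
    apply: I1;
    apply/rowP => k; pw H1 k; pw H2 k; rewrite !mxE.
    transitivity ((al * X11 0 k + be * X21 0 k) - (ga * X12 0 k + de * X22 0 k)).
      by rewrite d0; ring.
    by rewrite -h -h0 subrr.
  by move/eqP: U0; apply; rewrite H1 a0 b0 !scale0r addr0.
have al0 : al != 0.
  apply/eqP => a0; have [/eqP g0 b0 /eqP d0] : [/\ - ga = 0, be = 0 & - de = 0].
    apply: I2;
    apply/rowP => k; pw H1 k; pw H2 k; rewrite !mxE.
    transitivity ((al * X11 0 k + be * X21 0 k) - (ga * X12 0 k + de * X22 0 k)).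
      by rewrite a0; ring.
    by rewrite -h -h0 subrr.
  by move/eqP: U0; apply; rewrite H1 a0 b0 !scale0r addr0.
have [hx hy _] : [/\ de * a - e * al = 0, de * b + e * ga = 0 & - de * c - e * be = 0].
  apply: I1;
  apply/rowP => k; pw H1 k; pw H2 k; pw Z1 k; pw Z2 k; rewrite !mxE.
  transitivity (de * ((a * X11 0 k + b * X12 0 k) - (c * X21 0 k + e * X22 0 k))
     - e * ((al * X11 0 k + be * X21 0 k) - (ga * X12 0 k + de * X22 0 k))); first by ring.
  by rewrite -h -h0 -h1 -h2 !subrr !mulr0 subrr.
have e0 : e != 0.
  apply/eqP => e0; move: hx hy; rewrite e0 !mul0r !subr0 !addr0 => /eqP hx /eqP hy.
  move: hx hy; rewrite !mulf_eq0 (negbTE de0) /= => /eqP a0 /eqP b0.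
  by move/eqP: Z0; apply; rewrite Z1 a0 b0 !scale0r addr0.
exists al, be, ga, de, (de / e); split => //.
apply/rowP => k; pw Z1 k; rewrite !mxE h.
apply/eqP; rewrite -subr_eq0; apply/eqP.
transitivity (- ((de * a - e * al) * X11 0 k + (de * b + e * ga) * X12 0 k) / e); first by field.
by rewrite hx hy !mul0r add0r oppr0 mul0r.
Qed.

Lemma key_id M X11 X12 X21 X22 Y11 Y12 Y21 Y22 U W (al be ga de al' be' ga' de' : R) :
  U = al *: X11 + be *: X21 -> U = ga *: X12 + de *: X22 ->
  W = al' *: Y11 + be' *: Y12 -> W = ga' *: Y21 + de' *: Y22 ->
  bform M U W + bform M (al *: X11 - ga *: X12) (al' *: Y11 - ga' *: Y21) =
  al * al' * bform M X11 Y11 + ga * be' * bform M X12 Y12 + be * ga' * bform M X21 Y21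
  + de * de' * bform M X22 Y22.
Proof.
move=> H1 H2 H3 H4.
have EX : de *: X22 = U - ga *: X12 by rewrite H2 addrAC subrr add0r.
have EY : de' *: Y22 = W - ga' *: Y21 by rewrite H4 addrAC subrr add0r.
rewrite (_ : de * de' * bform M X22 Y22 = bform M (de *: X22) (de' *: Y22)); last first.
  by rewrite bformZl bformZr mulrA.
rewrite EX EY H1 H3 !(bformDl, bformDr, bformZl, bformZr, bformNl, bformNr); ring.
Qed.

Lemma step_gen M X11 X12 X21 X22 Y11 Y12 Y21 Y22 U W ZA ZB :
  indep3 X11 X12 X21 -> indep3 X12 X21 X22 -> indep3 Y11 Y21 Y12 -> indep3 Y21 Y12 Y22 ->
  U != 0 -> W != 0 -> ZA != 0 -> ZB != 0 ->
  (U <= col_mx X11 X21)%MS -> (U <= col_mx X12 X22)%MS ->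
  (W <= col_mx Y11 Y12)%MS -> (W <= col_mx Y21 Y22)%MS ->
  (exists a b : R, ZA = a *: X11 + b *: X12) -> (exists a b : R, ZA = a *: X21 + b *: X22) ->
  (exists a b : R, ZB = a *: Y11 + b *: Y21) -> (exists a b : R, ZB = a *: Y12 + b *: Y22) ->
  bform M ZA ZB = 0 -> bform M X11 Y11 = 0 -> bform M X12 Y12 = 0 -> bform M X21 Y21 = 0 ->
  exists c : R, c != 0 /\ bform M U W = c * bform M X22 Y22.
Proof.
move=> I1 I2 J1 J2 U0 W0 ZA0 ZB0 HU HU' HW HW' HA1 HA2 HB1 HB2 EZ E11 E12 E21.
have [al [be [ga [de [ka [HU1 HU2 de0 _ HZ]]]]]] := half I1 I2 U0 ZA0 HU HU' HA1 HA2.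
have [al' [be' [ga' [de' [ka' [HW1 HW2 de0' _ HZ']]]]]] := half J1 J2 W0 ZB0 HW HW' HB1 HB2.
have K := key_id M HU1 HU2 HW1 HW2.
rewrite HZ HZ' bformZl bformZr EZ E11 E12 E21 !mulr0 addr0 !add0r in K.
by exists (de * de'); split; [rewrite mulf_neq0 | ].
Qed.

Lemma step0 M P11 P12 P21 P22 U W : M^T = M ->
  indep3 P11 P12 P21 -> indep3 P12 P21 P22 -> indep3 P11 P21 P12 -> indep3 P21 P12 P22 ->
  U != 0 -> W != 0 -> (U <= col_mx P11 P21)%MS -> (U <= col_mx P12 P22)%MS ->
  (W <= col_mx P11 P12)%MS -> (W <= col_mx P21 P22)%MS ->
  bform M P11 P11 = 0 -> bform M P12 P12 = 0 -> bform M P21 P21 = 0 ->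
  exists c : R, c != 0 /\ bform M U W = c * bform M P22 P22.
Proof.
move=> HM I1 I2 J1 J2 U0 W0 HU HU' HW HW' E11 E12 E21.
have [al [be [ga [de [ka [HU1 HU2 de0 al0 HZ]]]]]] :=
  half I1 I2 U0 W0 HU HU' (span2P HW) (span2P HW').
have [al' [be' [ga' [de' [ka' [HW1 HW2 de0' al0' HZ']]]]]] :=
  half J1 J2 W0 U0 HW HW' (span2P HU) (span2P HU').
have [h1 _] : al - ka * al' = 0 /\ - ga - ka * be' = 0.
  apply: (indep3_2 I1); apply/rowP => k; pw HZ k; pw HW1 k; rewrite !mxE.
  transitivity ((al * P11 0 k - ga * P12 0 k) - ka * (al' * P11 0 k + be' * P12 0 k)); first by ring.
  by rewrite h -h0 subrr.
have [h2 _] : al' - ka' * al = 0 /\ - ga' - ka' * be = 0.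
  apply: (indep3_2 J1); apply/rowP => k; pw HZ' k; pw HU1 k; rewrite !mxE.
  transitivity ((al' * P11 0 k - ga' * P21 0 k) - ka' * (al * P11 0 k + be * P21 0 k)); first by ring.
  by rewrite h -h0 subrr.
move/eqP: h1; rewrite subr_eq0 => /eqP h1.
move/eqP: h2; rewrite subr_eq0 => /eqP h2.
have kk : ka * ka' = 1.
  by apply: (mulIf al0); rewrite mul1r -mulrA -h2 -h1.
have K := key_id M HU1 HU2 HW1 HW2.
rewrite HZ HZ' bformZl bformZr (bformC W U HM) E11 E12 E21 !mulr0 !add0r mulrA kk mul1r in K.
exists (de * de' / 2); split.
  by rewrite mulf_neq0 ?mulf_neq0 ?invr_neq0 ?pnatr_eq0.
rewrite mulrAC -K; by field.
Qed.
End Aux.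

Lemma quad_indep (R : realType) (n : nat) (a b c d : pt R n) :
  [&& noncollinear3 a b c, noncollinear3 a b d, noncollinear3 a c d & noncollinear3 b c d] ->
  [/\ indep3 a d b, indep3 d b c, indep3 a b d & indep3 b d c].
Proof.
case/and4P => _ /nc_indep h2 _ /nc_indep h4.
split.
- exact: indep3_23.
- exact: indep3_12 (indep3_23 h4).
- exact: h2.
- exact: indep3_23.
Qed.

Unset Implicit Arguments.
Set Strict Implicit.

Theorem theorem1p1 (R : realType) (m n : nat) (P : net R n)
    (LA LB : nat -> net R n) (M : 'M[R]_(n.+1)) :
  (2 <= m)%N -> (2 <= n)%N ->
  Qnet m P -> generic_net m P ->
  LA 0%N = P -> LB 0%N = P ->
  (forall d : nat, (1 <= d <= m.-1)%N ->
     [/\ laplaceA (m - d).+1 (LA d.-1) (LA d),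
         Qnet (m - d) (LA d) & generic_net (m - d) (LA d)]) ->
  (forall d : nat, (1 <= d <= m.-1)%N ->
     [/\ laplaceB (m - d).+1 (LB d.-1) (LB d),
         Qnet (m - d) (LB d) & generic_net (m - d) (LB d)]) ->
  quadric_form M ->
  (forall i j : nat, in_range m i -> in_range m j -> (i, j) != (m, m) ->
     on_quadric M (P i j)) ->
  (on_quadric M (P m m) <->
   conjugate M (LA m.-1 1%N 1%N) (LB m.-1 1%N 1%N)).
Proof.
move=> hm hn QP GP LA0 LB0 HA HB [HMs _] HQ.
have QA : forall d, (d <= m.-1)%N -> Qnet (m - d) (LA d) /\ generic_net (m - d) (LA d).
  case=> [|d] Hd; first by rewrite LA0 subn0.
  by have [] := HA d.+1 (Hd : (1 <= d.+1 <= m.-1)%N).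
have QB : forall d, (d <= m.-1)%N -> Qnet (m - d) (LB d) /\ generic_net (m - d) (LB d).
  case=> [|d] Hd; first by rewrite LB0 subn0.
  by have [] := HB d.+1 (Hd : (1 <= d.+1 <= m.-1)%N).
have loc : forall d i j, (d.+1 <= m.-1)%N -> in_range (m - d.+1) i -> in_range (m - d.+1) j ->
    bform M (LA d i j) (LB d i j) = 0 -> bform M (LA d i.+1 j) (LB d i.+1 j) = 0 ->
    bform M (LA d i j.+1) (LB d i j.+1) = 0 ->
    ((0 < d)%N -> bform M (LA d.-1 i.+1 j.+1) (LB d.-1 i.+1 j.+1) = 0) ->
    exists c : R, c != 0 /\ bform M (LA d.+1 i j) (LB d.+1 i j) = c * bform M (LA d i.+1 j.+1) (LB d i.+1 j.+1).
  move=> d i j Hd Hi Hj E11 E21 E12 Eprev.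
  have [LAs _ _] := HA d.+1 (Hd : (1 <= d.+1 <= m.-1)%N).
  have [LBs _ _] := HB d.+1 (Hd : (1 <= d.+1 <= m.-1)%N).
  have [U0 HU HU'] := LAs i j Hi Hj.
  have [W0 HW HW'] := LBs i j Hi Hj.
  have Hi' : in_range (m - d).-1 i by move: Hi Hd; clear; rewrite /in_range; lia.
  have Hj' : in_range (m - d).-1 j by move: Hj Hd; clear; rewrite /in_range; lia.
  have [_ GA] := QA d (ltnW Hd).
  have [_ GB] := QB d (ltnW Hd).
  have [I1 I2 I3 I4] := quad_indep (GA i j Hi' Hj').
  have [J1 J2 J3 J4] := quad_indep (GB i j Hi' Hj').
  clear LAs LBs GA GB.
  case: d Hd Hi Hj E11 E21 E12 Eprev U0 HU HU' W0 HW HW' Hi' Hj' I1 I2 I3 I4 J1 J2 J3 J4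
    => [|d] Hd Hi Hj E11 E21 E12 Eprev U0 HU HU' W0 HW HW' Hi' Hj' I1 I2 I3 I4 J1 J2 J3 J4.
    move: E11 E21 E12 HU HU' HW HW' I1 I2 I3 I4 J1 J2 J3 J4.
    rewrite LA0 LB0 => E11 E21 E12 HU HU' HW HW' I1 I2 I3 I4 J1 J2 J3 J4.
    exact: (step0 HMs I1 I2 I3 I4 U0 W0 HU HU' HW HW' E11 E12 E21).
  have Hd1 : (1 <= d.+1 <= m.-1)%N by move: Hd; clear; lia.
  have [LAp _ _] := HA d.+1 Hd1.
  have [LBp _ _] := HB d.+1 Hd1.
  have ri : in_range (m - d.+1) i by move: Hi Hd; clear; rewrite /in_range; lia.
  have ri1 : in_range (m - d.+1) i.+1 by move: Hi Hd; clear; rewrite /in_range; lia.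
  have rj : in_range (m - d.+1) j by move: Hj Hd; clear; rewrite /in_range; lia.
  have rj1 : in_range (m - d.+1) j.+1 by move: Hj Hd; clear; rewrite /in_range; lia.
  have ri2 : in_range (m - d) i.+1 by move: Hi Hd; clear; rewrite /in_range; lia.
  have rj2 : in_range (m - d) j.+1 by move: Hj Hd; clear; rewrite /in_range; lia.
  have [_ _ a2] := LAp i j ri rj.
  have [_ b1 _] := LAp i j.+1 ri rj1.
  have [_ _ c2] := LAp i.+1 j ri1 rj.
  have [_ d1 _] := LAp i.+1 j.+1 ri1 rj1.
  have [_ HA1] := swap2 a2 b1 (indep3_2 I1).
  have [HA2 _] := swap2 c2 d1 (indep3_2 (indep3_23 (indep3_12 I2))).
  have [_ _ e2] := LBp i j ri rj.
  have [_ f1 _] := LBp i.+1 j ri1 rj.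
  have [_ _ g2] := LBp i j.+1 ri rj1.
  have [_ h1 _] := LBp i.+1 j.+1 ri1 rj1.
  have [_ HB1] := swap2 e2 f1 (indep3_2 J3).
  have [HB2 _] := swap2 g2 h1 (indep3_2 (indep3_23 J2)).
  have Hd0 : (d <= m.-1)%N by move: Hd; clear; lia.
  have [[nzA _] _] := QA d Hd0.
  have [[nzB _] _] := QB d Hd0.
  exact: (step_gen I1 I2 J3 J4 U0 W0 (nzA _ _ ri2 rj2) (nzB _ _ ri2 rj2) HU HU' HW HW'
            HA1 HA2 HB1 HB2 (Eprev isT) E11 E12 E21).
have main : forall d, (d <= m.-1)%N ->
  ((forall i j, in_range (m - d) i -> in_range (m - d) j -> (i, j)%N != (m - d, m - d)%N ->
      bform M (LA d i j) (LB d i j) = 0) /\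
   exists c : R, c != 0 /\
     bform M (LA d (m - d)%N (m - d)%N) (LB d (m - d)%N (m - d)%N) = c * bform M (P m m) (P m m))
  /\ ((0 < d)%N -> forall i j, in_range (m - d.-1) i -> in_range (m - d.-1) j ->
      (i, j)%N != (m - d.-1, m - d.-1)%N -> bform M (LA d.-1 i j) (LB d.-1 i j) = 0).
  elim=> [|d IH] Hd.
    split; last by [].
    rewrite LA0 LB0 subn0; split; first by move=> i j Hi Hj Hij; exact: HQ.
    by exists 1; split; [exact: oner_neq0 | rewrite mul1r].
  have [[Sa [c [c0 Hc]]] Sp] := IH (ltnW Hd).
  split; last by move=> _; exact: Sa.
  split.
    move=> i j Hi Hj Hij.
    have r1 : in_range (m - d) i by move: Hi Hd; clear; rewrite /in_range; lia.
    have r2 : in_range (m - d) i.+1 by move: Hi Hd; clear; rewrite /in_range; lia.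
    have r3 : in_range (m - d) j by move: Hj Hd; clear; rewrite /in_range; lia.
    have r4 : in_range (m - d) j.+1 by move: Hj Hd; clear; rewrite /in_range; lia.
    have r5 : in_range (m - d.-1) i.+1 by move: Hi Hd; clear; rewrite /in_range; lia.
    have r6 : in_range (m - d.-1) j.+1 by move: Hj Hd; clear; rewrite /in_range; lia.
    have n1 : (i, j)%N != (m - d, m - d)%N by move: Hi Hd; clear; rewrite /in_range xpair_eqE; lia.
    have n2 : (i.+1, j)%N != (m - d, m - d)%N by move: Hj Hd; clear; rewrite /in_range xpair_eqE; lia.
    have n3 : (i, j.+1)%N != (m - d, m - d)%N by move: Hi Hd; clear; rewrite /in_range xpair_eqE; lia.
    have n4 : (0 < d)%N -> (i.+1, j.+1)%N != (m - d.-1, m - d.-1)%N.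
      by move: Hi Hd; clear; rewrite /in_range xpair_eqE; lia.
    have n5 : (i.+1, j.+1)%N != (m - d, m - d)%N.
      by move: Hij Hi Hj Hd; clear; rewrite /in_range !xpair_eqE; lia.
    have [c' [_ ->]] := loc d i j Hd Hi Hj (Sa i j r1 r3 n1) (Sa i.+1 j r2 r3 n2)
      (Sa i j.+1 r1 r4 n3) (fun h => Sp h i.+1 j.+1 r5 r6 (n4 h)).
    by rewrite (Sa i.+1 j.+1 r2 r4 n5) mulr0.
  have r0 : in_range (m - d.+1) (m - d.+1) by move: Hd hm; clear; rewrite /in_range; lia.
  have r1 : in_range (m - d) (m - d.+1) by move: Hd hm; clear; rewrite /in_range; lia.
  have r2 : in_range (m - d) (m - d.+1).+1 by move: Hd hm; clear; rewrite /in_range; lia.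
  have r5 : in_range (m - d.-1) (m - d.+1).+1 by move: Hd hm; clear; rewrite /in_range; lia.
  have n1 : (m - d.+1, m - d.+1)%N != (m - d, m - d)%N by move: Hd hm; clear; rewrite xpair_eqE; lia.
  have n2 : ((m - d.+1).+1, m - d.+1)%N != (m - d, m - d)%N by move: Hd hm; clear; rewrite xpair_eqE; lia.
  have n3 : (m - d.+1, (m - d.+1).+1)%N != (m - d, m - d)%N by move: Hd hm; clear; rewrite xpair_eqE; lia.
  have n4 : (0 < d)%N -> ((m - d.+1).+1, (m - d.+1).+1)%N != (m - d.-1, m - d.-1)%N.
    by move: Hd hm; clear; rewrite xpair_eqE; lia.
  have [c' [c'0 ->]] := loc d _ _ Hd r0 r0 (Sa _ _ r1 r1 n1) (Sa _ _ r2 r1 n2)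
      (Sa _ _ r1 r2 n3) (fun h => Sp h _ _ r5 r5 (n4 h)).
  rewrite (_ : (m - d.+1).+1 = m - d)%N; last by move: Hd hm; clear; lia.
  rewrite Hc; exists (c' * c); split; first by rewrite mulf_neq0.
  by rewrite mulrA.
have [[_ [c [c0 Hc]]] _] := main m.-1 (leqnn _).
rewrite (_ : m - m.-1 = 1)%N in Hc; last by move: hm; clear; lia.
rewrite /on_quadric /conjugate Hc; split => [->|]; first by rewrite mulr0.
by move/eqP; rewrite mulf_eq0 (negbTE c0) => /eqP.
Qed.
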